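(* Let $G$ be a Polish group with identity $1_G$, let $A\subseteq G$, and suppose the Borel probability measure $\mu$ witnesses that $A$ is openly Haar null. Let $V$ be a neighborhood of $1_G$. Then there exists a Borel probability measure $\mu'$ on $G$ which also witnesses that $A$ is openly Haar null and whose support is compact and contained in $V$.
   Context: A Polish group is a topological group whose topology is separable and completely metrizable. A Borel probability measure $\mu$ on $G$ witnesses that $A\subseteq G$ is openly Haar null if for every $\varepsilon>0$ there is an open set $U\supseteq A$ with $\mu(gUh)<\varepsilon$ for all $g,h\in G$. *)

(* Defs.v *)
From HB Require Import structures.
From mathcomp Require Import all_boot all_order all_algebra.
From mathcomp Require Import all_classical all_reals all_analysis.
Set Implicit Arguments. Unset Strict Implicit. Unset Printing Implicit Defensive.
Import Order.TTheory GRing.Theory Num.Theory.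
Local Open Scope classical_set_scope.
Local Open Scope ring_scope.

Definition is_topological_group (G : ptopologicalType)
  (mul : G -> G -> G) (inv : G -> G) (one : G) : Prop :=
  [/\ (forall x y z, mul x (mul y z) = mul (mul x y) z),
      (forall x, mul one x = x /\ mul x one = x),
      (forall x, mul (inv x) x = one /\ mul x (inv x) = one),
      continuous (fun p : G * G => mul p.1 p.2) &
      continuous inv].

Definition separable_space (G : ptopologicalType) : Prop :=
  exists D : set G, countable D /\ dense D.

Definition complete_compatible_metric (R : realType) (G : ptopologicalType)
  (d : G -> G -> R) : Prop :=
  [/\ (forall x y, d x y = 0 <-> x = y),
      (forall x y, d x y = d y x),
      (forall x y z, d x z <= d x y + d y z),
      (forall U : set G, open U <->
         (forall x, U x -> exists2 e : R, 0 < e & [set y | d x y < e] `<=` U)) &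
      (forall u : nat -> G,
         (forall e : R, 0 < e -> exists N : nat, forall m n : nat,
             (N <= m)%N -> (N <= n)%N -> d (u m) (u n) < e) ->
         exists x : G, u @ \oo --> x)].

Definition completely_metrizable (R : realType) (G : ptopologicalType) : Prop :=
  exists d : G -> G -> R, complete_compatible_metric d.

Definition polish_space (R : realType) (G : ptopologicalType) : Prop :=
  separable_space G /\ completely_metrizable R G.

Definition borel (G : ptopologicalType) : measurableType _ := @g_sigma_algebraType G (@open G).

Definition witnesses_openly_haar_null (R : realType) (G : ptopologicalType)
  (mul : G -> G -> G) (mu : probability (borel G) R) (A : set G) : Prop :=
  forall eps : R, 0 < eps -> exists U : set G,
    [/\ open U, A `<=` U &
        forall g h : G, (mu [set mul (mul g u) h | u in U] < eps%:E)%E].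

Definition msupport (R : realType) (G : ptopologicalType)
  (mu : probability (borel G) R) : set G :=
  [set x | forall U : set G, open U -> U x -> (0 < mu U)%E].

(* Main.v *)
Require Import Defs.
From HB Require Import structures.
From mathcomp Require Import all_boot all_order all_algebra.
From mathcomp Require Import all_classical all_reals all_analysis.
From mathcomp Require Import lra.
Import Order.TTheory GRing.Theory Num.Theory.
Local Open Scope classical_set_scope.
Local Open Scope ring_scope.
Set Implicit Arguments. Unset Strict Implicit. Unset Printing Implicit Defensive.
Section Grp.
Context (G : ptopologicalType) (mul : G -> G -> G) (inv : G -> G) (one : G)
  (HG : is_topological_group mul inv one).

Lemma g_assoc x y z : mul x (mul y z) = mul (mul x y) z.
Proof. by case: HG. Qed.
Lemma g_1x x : mul one x = x. Proof. by case: HG => _ h _ _ _; case: (h x). Qed.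
Lemma g_x1 x : mul x one = x. Proof. by case: HG => _ h _ _ _; case: (h x). Qed.
Lemma g_Vx x : mul (inv x) x = one. Proof. by case: HG => _ _ h _ _; case: (h x). Qed.
Lemma g_xV x : mul x (inv x) = one. Proof. by case: HG => _ _ h _ _; case: (h x). Qed.
Lemma g_VK a x : mul (inv a) (mul a x) = x. Proof. by rewrite g_assoc g_Vx g_1x. Qed.
Lemma g_KV a x : mul a (mul (inv a) x) = x. Proof. by rewrite g_assoc g_xV g_1x. Qed.
Lemma g_xKV a x : mul (mul x a) (inv a) = x. Proof. by rewrite -g_assoc g_xV g_x1. Qed.
Lemma g_xVK a x : mul (mul x (inv a)) a = x. Proof. by rewrite -g_assoc g_Vx g_x1. Qed.

Lemma cont_inv : continuous inv. Proof. by case: HG. Qed.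

Lemma cont_lmul a : continuous (mul a).
Proof.
move=> x; case: HG => _ _ _ Hc _.
have h1 : (fun y => (a, y)) @ x --> (a, x).
  apply: cvg_pair; [exact: cvg_cst | exact: cvg_id].
exact: (cvg_comp _ _ h1 (Hc (a, x))).
Qed.

Lemma cont_rmul a : continuous (mul^~ a).
Proof.
move=> x; case: HG => _ _ _ Hc _.
have h1 : (fun y => (y, a)) @ x --> (x, a).
  apply: cvg_pair; [exact: cvg_id | exact: cvg_cst].
exact: (cvg_comp _ _ h1 (Hc (x, a))).
Qed.

Lemma cont_lrmul a b : continuous (fun x => mul (mul a x) b).
Proof.
move=> x; apply: (continuous_comp (f := mul a) (g := mul^~ b)).
  exact: cont_lmul. exact: cont_rmul.
Qed.

Lemma open_pre (f : G -> G) (U : set G) : continuous f -> open U -> open (f @^-1` U).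
Proof. by move=> cf oU; apply: open_comp => // y _; exact: cf. Qed.

Lemma closed_pre (f : G -> G) (U : set G) : continuous f -> closed U -> closed (f @^-1` U).
Proof. by move=> cf cU; apply: closed_comp => // y _; exact: cf. Qed.


Lemma img_pre g h U : [set mul (mul g u) h | u in U] =
  (fun x => mul (mul (inv g) x) (inv h)) @^-1` U.
Proof.
apply/seteqP; split => x.
  by move=> [u Uu <-] /=; rewrite g_assoc g_VK g_xKV.
move=> /= hx; exists (mul (mul (inv g) x) (inv h)) => //.
by rewrite g_assoc g_KV g_xVK.
Qed.

Lemma pre_img a g h U : (mul (inv a)) @^-1` [set mul (mul g u) h | u in U] =
  [set mul (mul (mul a g) u) h | u in U].
Proof.
apply/seteqP; split => x /=.
  move=> [u Uu hu]; exists u => //; rewrite -[x](g_KV a) -hu.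
  by rewrite !g_assoc.
by move=> [u Uu <-]; exists u => //; rewrite !g_assoc g_Vx g_1x.
Qed.

Lemma open_img g h U : open U -> open [set mul (mul g u) h | u in U].
Proof. by move=> oU; rewrite img_pre; apply: open_pre => //; exact: cont_lrmul. Qed.

End Grp.
Section Met.
Context (R : realType) (G : ptopologicalType) (d : G -> G -> R)
  (Hd : complete_compatible_metric d).

Lemma d_xx x : d x x = 0. Proof. by case: Hd => h _ _ _ _; apply/h. Qed.
Lemma d_sym x y : d x y = d y x. Proof. by case: Hd. Qed.
Lemma d_tri x y z : d x z <= d x y + d y z. Proof. by case: Hd. Qed.
Lemma d_ge0 x y : 0 <= d x y.
Proof.
have := d_tri x y x; rewrite d_xx (d_sym y x) => h; lra.
Qed.
Lemma d_open (U : set G) : open U <->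
  (forall x, U x -> exists2 e : R, 0 < e & [set y | d x y < e] `<=` U).
Proof. by case: Hd. Qed.

Lemma ball_open x r : open [set y | d x y < r].
Proof.
apply/d_open => y /= hy; exists (r - d x y); first by rewrite subr_gt0.
move=> z /= hz; have := d_tri x y z; lra.
Qed.

Lemma ball_nbhs x e : 0 < e -> nbhs x [set y | d x y < e].
Proof.
move=> e0; apply: open_nbhs_nbhs; split; first exact: ball_open.
by rewrite /= d_xx.
Qed.

Lemma nbhs_ball x W : nbhs x W -> exists2 e : R, 0 < e & [set y | d x y < e] `<=` W.
Proof.
rewrite nbhsE => -[B [oB Bx] BW].
have [e e0 h] := (proj1 (d_open B)) oB x Bx.
by exists e => // y /h; apply: BW.
Qed.

Lemma cball_closed x r : closed [set y | d x y <= r].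
Proof.
have -> : [set y | d x y <= r] = ~` [set y | r < d x y].
  by apply/seteqP; split => y /=; rewrite real_leNgt ?num_real //; [move/negP|move/negP].
apply: open_closedC; apply/d_open => y /= hy; exists (d x y - r); first by rewrite subr_gt0.
move=> z /= hz; have := d_tri x z y; rewrite (d_sym z y) => h.
lra.
Qed.


Lemma cvg_ev (c : nat -> G) (x : G) B : c @ \oo --> x -> nbhs x B ->
  exists N, forall n, (N <= n)%N -> B (c n).
Proof. by move=> h /h [N _ hN]; exists N => n hn; apply: hN. Qed.

Definition rk (k : nat) : R := (k.+1%:R)^-1.
Lemma rk_gt0 k : 0 < rk k. Proof. by rewrite /rk invr_gt0 ltr0n. Qed.
Lemma rk_le m n : (m <= n)%N -> rk n <= rk m.
Proof. by move=> h; rewrite /rk lef_pV2 ?posrE ?ltr0n // ler_nat ltnS. Qed.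
Lemma rk_small (eps : R) : 0 < eps -> exists k, rk k < eps.
Proof. by move=> h; have [k hk] := ltr_add_invr h; exists k; rewrite add0r in hk. Qed.

Definition cb x r := [set y | d x y <= r].

Section Compact.
Context (e : nat -> G) (N : nat -> nat).
Definition FF k n := \bigcup_(i < n) cb (e i) (rk k).

Lemma FF_closed k n : closed (FF k n).
Proof. rewrite /FF bigcup_mkord; apply: closed_bigsetU => i _; exact: cball_closed. Qed.

Lemma ultra_fin (F : set_system G) (S : nat -> set G) n : UltraFilter F ->
  F (\bigcup_(i < n) S i) -> exists i, F (S i).
Proof.
move=> UF; have PF := ultra_proper (F := F).
elim: n => [|n IH].
  have -> : \bigcup_(i < 0) S i = set0 by apply/seteqP; split => y // [i].
  by move=> /filter_ex [].
have -> : \bigcup_(i < n.+1) S i = \bigcup_(i < n) S i `|` S n.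
  apply/seteqP; split => y.
    move=> [i hi Sy]; move: hi; rewrite /= ltnS leq_eqVlt => /orP[/eqP hin|hi]; first by right; rewrite -hin.
    by left; exists i.
  move=> [[i hi Sy]|Sy]; last by exists n => //=.
  by exists i => //=; apply: ltnW.
move=> hU; case: (in_ultra_setVsetC (S n) UF) => hS; first by exists n.
apply: IH; apply: filterS (filterI hU hS) => y [[//|Sy] nSy]; exfalso; exact: nSy.
Qed.

Lemma FF_compact : compact (\bigcap_k FF k (N k)).
Proof.
set K := \bigcap_k _.
have Kcl : closed K by apply: closed_bigI => k _; exact: FF_closed.
rewrite compact_ultra => F UF FK; have PF := ultra_proper (F := F).
have key k : exists i, F (cb (e i) (rk k)).
  apply: (ultra_fin (n := N k)) => //; apply: filterS FK => y; exact.
have [ik hik] := choice key; set c := fun k => e (ik k).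
have dc j k : d (c j) (c k) <= rk j + rk k.
  have [y [h1 h2]] := filter_ex (filterI (hik j) (hik k)).
  by have := d_tri (c j) y (c k); rewrite /cb /= in h1 h2; rewrite (d_sym y) in h2 *; lra.
have [x hx] : exists x : G, c @ \oo --> x.
  case: Hd => _ _ _ _ /(_ c); apply => eps eps0.
  have [M hM] := rk_small (eps := eps / 2) ltac:(lra).
  exists M => m n hm hn; have := dc m n; have := rk_le hm; have := rk_le hn; lra.
have Fx : F --> x.
  move=> W /nbhs_ball [r r0 hW].
  have [k1 hk1] := rk_small (eps := r / 2) ltac:(lra).
  have [k2 hk2] := cvg_ev hx (ball_nbhs x (e := r / 2) ltac:(lra)).
  set k := maxn k1 k2.
  have h1 := rk_le (leq_maxl k1 k2); have h2 := hk2 k (leq_maxr k1 k2).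
  apply: filterS (hik k) => y hy; apply: hW => /=.
  have := d_tri x (c k) y; rewrite /cb /= in hy h2; lra.
exists x; split => //; apply: Kcl => B hB.
have [y [? ?]] := filter_ex (filterI FK (Fx _ hB)); by exists y.
Qed.

End Compact.
End Met.

Lemma mopen (G : ptopologicalType) (U : set G) : open U -> measurable (U : set (borel G)).
Proof. by move=> oU; apply: sub_sigma_algebra. Qed.

Lemma mclosed (G : ptopologicalType) (U : set G) : closed U -> measurable (U : set (borel G)).
Proof.
move=> cU; rewrite -[U]setCK; apply: measurableC; apply: mopen; exact: closed_openC.
Qed.

Lemma muE (R : realType) (G : ptopologicalType) (mu : probability (borel G) R) (A : set G) :
  measurable (A : set (borel G)) -> exists r : R, mu A = r%:E /\ 0 <= r <= 1.
Proof.
move=> mA; have h0 := measure_ge0 mu A; have h1 := probability_le1 mu mA.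
have hf : mu A \is a fin_num by rewrite ge0_fin_numE // (le_lt_trans h1) ?ltey.
exists (fine (mu A)); rewrite fineK //; split => //.
by rewrite -!lee_fin fineK // h0 h1.
Qed.

Section Tight.
Context (R : realType) (G : ptopologicalType) (d : G -> G -> R)
  (Hd : complete_compatible_metric d) (e : nat -> G)
  (He : forall y (r : R), 0 < r -> exists n, d (e n) y < r)
  (mu : probability (borel G) R).

Lemma FF_big k (eps : R) : 0 < eps -> exists N, (mu (~` FF d e k N) <= eps%:E)%E.
Proof.
move=> eps0; apply/not_existsP => hN.
have mF n : measurable (FF d e k n : set (borel G)) by apply: mclosed; exact: FF_closed.
have hle n : (mu (FF d e k n) <= (1 - eps)%:E)%E.
  have := hN n; have [r [hr _]] := muE mu (mF n).
  rewrite probability_setC // hr -EFinB lee_fin => /negP; rewrite -ltNge => h.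
  rewrite lee_fin; lra.
have cov : \bigcup_n FF d e k n = setT.
  apply/seteqP; split => // y _.
  have [n hn] := He y (@rk_gt0 R k).
  exists n.+1 => //; exists n => //=; rewrite /cb /=; exact: ltW.
have hc : (mu \o FF d e k) @ \oo --> 1%:E.
  rewrite -(probability_setT mu) -cov; apply: nondecreasing_cvg_mu => //.
    by rewrite cov; exact: measurableT.
  move=> m n /= hmn; rewrite subsetEset => y [i /= hi hy]; exists i => //=; exact: leq_trans hi hmn.
have hcv : cvg ((mu \o FF d e k) @ \oo) by apply/cvg_ex; exists 1%:E.
have := lime_le hcv (nearW _ hle); rewrite (cvg_lim _ hc) // lee_fin => h.
have h1 : (1 : R) <= 1 - eps by apply: h; exact: _.
lra.
Qed.


Lemma tight (del : R) : 0 < del ->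
  exists K : set G, [/\ closed K, compact K & (mu (~` K) <= del%:E)%E].
Proof.
move=> del0.
have hpos k : 0 < del / (2 ^ k.+1)%:R by rewrite divr_gt0 // ltr0n expn_gt0.
have [N hN] := choice (fun k => FF_big k (hpos k)).
exists (\bigcap_k FF d e k (N k)); split.
- by apply: closed_bigI => k _; exact: FF_closed.
- exact: FF_compact.
have mF k : measurable (~` FF d e k (N k) : set (borel G)).
  by apply: measurableC; apply: mclosed; exact: FF_closed.
rewrite setC_bigcap.
apply: le_trans (measure_sigma_subadditive mu (F := fun k => ~` FF d e k (N k)) mF _ _) _.
- by apply: bigcup_measurable => k _; exact: mF.
- by move=> y [k _ hy]; exists k.
apply: le_trans (epsilon_trick0 xpredT (ltW del0)).
by apply: lee_nneseries => n *; [exact: measure_ge0 | exact: hN].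
Qed.

End Tight.

Definition pushf d (T : measurableType d) (R : realType)
  (m : {measure set T -> \bar R}) (f : T -> T) (mf : measurable_fun setT f) :
  set T -> \bar R := fun A => m (f @^-1` A).

Section pushf_measure.
Local Open Scope ereal_scope.
Context d (T : measurableType d) (R : realType).
Variables (m : {measure set T -> \bar R}) (f : T -> T) (mf : measurable_fun setT f).

Let pushf0 : pushf m mf set0 = 0.
Proof. by rewrite /pushf preimage_set0 measure0. Qed.

Let pushf_ge0 A : 0 <= pushf m mf A.
Proof. exact: measure_ge0. Qed.

Let pushf_sigma_additive : semi_sigma_additive (pushf m mf).
Proof.
move=> F mF tF mUF; rewrite /pushf preimage_bigcup.
apply: measure_semi_sigma_additive.
- by move=> n; rewrite -[X in measurable X]setTI; exact: mf.
- apply/trivIsetP => /= i j _ _ ij; rewrite -preimage_setI.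
  by move/trivIsetP : tF => /(_ _ _ _ _ ij) ->//; rewrite preimage_set0.
- by rewrite -preimage_bigcup -[X in measurable X]setTI; exact: mf.
Qed.

HB.instance Definition _ := isMeasure.Build _ _ _
  (pushf m mf) pushf0 pushf_ge0 pushf_sigma_additive.
End pushf_measure.

Lemma test (R : realType) (G : ptopologicalType) (mu : probability (borel G) R)
  (f : G -> G) (mf : measurable_fun setT (f : borel G -> borel G)) (S : set G)
  (mS : measurable (S : set (borel G))) :
  exists mu' : probability (borel G) R, forall X, mu' X = mnormalize (pushf (mrestr mu mS) mf) mu X.
Proof. by exists (mnormalize (pushf (mrestr mu mS) mf) mu). Qed.

Theorem lemma4p35 (R : realType) (G : ptopologicalType)
  (mul : G -> G -> G) (inv : G -> G) (one : G)
  (HG : is_topological_group mul inv one) (HP : polish_space R G)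
  (A : set G) (mu : probability (borel G) R)
  (Hmu : witnesses_openly_haar_null mul mu A)
  (V : set G) (HV : nbhs one V) :
  exists mu' : probability (borel G) R,
    [/\ witnesses_openly_haar_null mul mu' A,
        compact (msupport mu') & msupport mu' `<=` V].
Proof.
move: (HP) => [[D [Dc Dd]] [d Hd]].
have [e he] : exists e : nat -> G, D `<=` range e.
  by move/pcard_surjP: Dc => [g hg]; exists g.
have dens (O : set G) : open O -> O !=set0 -> exists n, O (e n).
  move=> oO nO; have [z [Oz Dz]] := Dd O nO oO.
  by have [n _ hn] := he z Dz; exists n; rewrite hn.
have He (y : G) (r : R) : 0 < r -> exists n, d (e n) y < r.
  move=> r0; have ny : [set z | d y z < r] !=set0 by exists y; rewrite /= (d_xx Hd).
  have [n hn] := dens _ (ball_open Hd y r) ny.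
  by exists n; rewrite (d_sym Hd).
have [r r0 hV] := nbhs_ball Hd HV.
pose Wo := [set x | d one x < r / 2].
pose Wc := [set x | d one x <= r / 2].
pose T n := [set x | Wo (mul (inv (e n)) x)].
have oT n : open (T n).
  by apply: (open_pre (f := mul (inv (e n)))); [exact: (cont_lmul HG) | exact: ball_open].
have mT n : measurable (T n : set (borel G)) by apply: mopen.
have cov y : exists n, T n y.
  pose O := [set z | Wo (mul (inv z) y)].
  have oO : open O.
    apply: (open_pre (f := fun z => mul (inv z) y)); last exact: ball_open.
    move=> z; apply: (continuous_comp (f := inv) (g := mul^~ y)).
      exact: (cont_inv HG). exact: (cont_rmul HG).
  have nO : O !=set0 by exists y; rewrite /O /Wo /= (g_Vx HG) (d_xx Hd); lra.
  by have [k hk] := dens O oO nO; exists k.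
have [n pn] : exists n, (0 < mu (T n))%E.
  apply/not_existsP => h0.
  have h0' k : mu (T k) = 0%E.
    by apply/eqP; rewrite eq_le measure_ge0 andbT leNgt; apply/negP; exact: h0.
  have cv : setT `<=` \bigcup_k T k by move=> y _; have [k hk] := cov y; exists k.
  have := measure_sigma_subadditive mu (A := setT) (F := T) mT measurableT cv.
  rewrite (eseries0 (fun i _ _ => h0' i)).
  move=> h; have : (1 <= 0 :> \bar R)%E by rewrite -(probability_setT mu); exact: h.
  by rewrite lee_fin ler10.
pose a := e n.
have [p [hp _]] := muE mu (mT n).
have p0 : 0 < p by rewrite -lte_fin -hp.
have [K [Kcl Kco hK]] := @tight R G d Hd e He mu (p / 2) ltac:(lra).
pose S := K `&` [set x | Wc (mul (inv a) x)].
have Scl : closed S.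
  apply: closedI => //; apply: (closed_pre (f := mul (inv a))); first exact: (cont_lmul HG).
  exact: cball_closed.
have mS : measurable (S : set (borel G)) by apply: mclosed.
have [m [hm _]] := muE mu mS.
have mKc : measurable (~` K : set (borel G)) by apply: measurableC; apply: mclosed.
have [q [hq _]] := muE mu mKc.
have m0 : 0 < m.
  have sub : T n `<=` S `|` ~` K.
    move=> x Tx; case: (pselect (K x)) => Kx; [left | by right].
    by split => //; rewrite /Wc /=; apply: ltW.
  have mU : measurable (S `|` ~` K : set (borel G)) by exact: measurableU.
  have h1 := le_measure mu (mem_set (mT n)) (mem_set mU) sub.
  have h2 := measureU2 mu mS mKc.
  have h3 : (p%:E <= m%:E + q%:E)%E by rewrite -hp -hm -hq; exact: le_trans h1 h2.
  move: h3 hK; rewrite hq -EFinD !lee_fin; lra.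
have mf : measurable_fun setT (mul (inv a) : borel G -> borel G).
  apply: (@measurability _ _ (borel G) (borel G) setT (mul (inv a)) (@open G)) => //.
  move=> _ [B oB <-]; apply: measurableI => //; apply: mopen.
  by apply: open_pre => //; exact: (cont_lmul HG).
pose P : probability (borel G) R := mnormalize (pushf (mrestr mu mS) mf) mu.
have PE X : P X = (mu ((mul (inv a)) @^-1` X `&` S) * (m^-1)%:E)%E.
  rewrite /P /= /mnormalize /pushf /=.
  have -> : mrestr mu mS (mul (inv a) @^-1` setT) = m%:E.
    rewrite /mrestr -hm; congr (mu _); apply/seteqP; split => x //; first by case.
  by rewrite eqe (gt_eqF m0) /= /mrestr.
have msub : msupport P `<=` [set x | S (mul a x)].
  move=> x hx; apply/not_notP => nS.
  pose O := ~` [set x | S (mul a x)].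
  have oO : open O.
    apply: closed_openC; apply: (closed_pre (f := mul a)) => //; exact: (cont_lmul HG).
  have := hx O oO nS; rewrite PE.
  have -> : mul (inv a) @^-1` O `&` S = set0.
    apply/seteqP; split => y // [hy Sy]; apply: hy; rewrite /= (g_KV HG); exact Sy.
  by rewrite measure0 mul0e ltxx.
exists P; split.
- move=> eps eps0.
  have [U [oU AU hU]] := Hmu (eps * m) (mulr_gt0 eps0 m0).
  exists U; split => // g h; rewrite PE.
  set Y := [set mul (mul g u) h | u in U].
  have mpre : measurable (mul (inv a) @^-1` Y `&` S : set (borel G)).
    apply: measurableI => //; apply: mopen; rewrite (pre_img HG); exact: (open_img HG).
  have mZ : measurable ([set mul (mul (mul a g) u) h | u in U] : set (borel G)).
    by apply: mopen; exact: (open_img HG).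
  have sub : mul (inv a) @^-1` Y `&` S `<=` [set mul (mul (mul a g) u) h | u in U].
    by move=> x [hx _]; rewrite -(pre_img HG); exact: hx.
  have h1 := le_measure mu (mem_set mpre) (mem_set mZ) sub.
  have h2 := hU (mul a g) h.
  have [s [hs _]] := muE mu mpre.
  have [t [ht _]] := muE mu mZ.
  have h3 : (s%:E <= t%:E)%E by rewrite -hs -ht; exact: h1.
  have h4 : (t%:E < (eps * m)%:E)%E by rewrite -ht; exact: h2.
  rewrite hs -EFinM lte_fin ltr_pdivrMr //.
  rewrite lee_fin in h3; rewrite lte_fin in h4; lra.
- have Sco : compact S by apply: (subclosed_compact Scl Kco); move=> x [].
  have Ico : compact (mul (inv a) @` S).
    apply: continuous_compact => //; apply: continuous_subspaceT; exact: (cont_lmul HG).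
  have Mcl : closed (msupport P).
    move=> x hx U oU Ux.
    have [y [My Uy]] := hx U (open_nbhs_nbhs (conj oU Ux)); exact: My U oU Uy.
  apply: (subclosed_compact Mcl Ico) => x /msub Sx.
  by exists (mul a x) => //; rewrite (g_VK HG).
- move=> x /msub [_ Wx]; apply: hV; rewrite /Wc /= (g_VK HG) in Wx; rewrite /=; lra.
Qed.
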